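(* Let $G$ be a finite group with subgroups $H_1,H_2$, and let $\Xi$ be a $G$-solitary linear character of $H_1$. There exists a linear character $\chi$ of $H_2$ with $\mathrm{Ind}^G_{H_1}\Xi\cong\mathrm{Ind}^G_{H_2}\chi$ if and only if $H_1$ and $H_2$ are conjugate subgroups of $G$.
   Context: A monomial structure on a representation $\rho\colon G\to\mathrm{Aut}(V)$ is a decomposition $V=\bigoplus_{x\in\Omega}\mathcal L_x$ into one-dimensional subspaces such that $G$ permutes the lines $\mathcal L_x$; the set $\{\mathcal L_x\}$ is then a $G$-set, and an isomorphism of monomial structures is an isomorphism of $G$-sets. A linear character $\Xi$ of $H\le G$ is $G$-solitary if $\mathrm{Ind}^G_H\Xi$ has a unique monomial structure up to isomorphism. *)

(* Defs.v *)
From mathcomp Require Import all_boot all_order all_algebra all_fingroup all_solvable all_field all_character.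
Set Implicit Arguments. Unset Strict Implicit. Unset Printing Implicit Defensive.
Import GRing.Theory Num.Theory.
Local Open Scope ring_scope.

Section Monomial.
Variables (gT : finGroupType) (G : {group gT}) (n : nat).
Variable rG : mx_representation algC G n.

(* A monomial structure on rG (row vectors, right action x |-> x *m rG g):
   a basis (rows of the invertible matrix B) whose lines L_i = <row i B>
   decompose V = 'rV_n and are permuted by every g in G, i.e. the image
   of the line L_i under g is contained in (hence equal to) some line L_j. *)
Definition monomial_structure (B : 'M[algC]_n) : Prop :=
  B \in unitmx /\
  forall g, g \in G -> forall i : 'I_n, exists j : 'I_n,
    (row i B *m rG g <= row j B)%MS.

(* The G-set of lines of B: g sends line i to line j iff L_i * g = L_j
   (equivalently L_i * g <= L_j).  An isomorphism of monomial structures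
   is an isomorphism of these G-sets: a bijection of the lines commuting
   with the G-actions. *)
Definition iso_monomial_structure (B1 B2 : 'M[algC]_n) : Prop :=
  exists f : {perm 'I_n},
    forall g, g \in G -> forall i j : 'I_n,
      (row i B1 *m rG g <= row j B1)%MS <-> (row (f i) B2 *m rG g <= row (f j) B2)%MS.

End Monomial.

Definition G_solitary (gT : finGroupType) (G H : {group gT}) (xi : 'CF(H)) : Prop :=
  forall (n : nat) (rG : mx_representation algC G n),
    cfRepr rG = 'Ind[G] xi ->
    (exists B, monomial_structure rG B) /\
    (forall B1 B2, monomial_structure rG B1 -> monomial_structure rG B2 ->
       iso_monomial_structure rG B1 B2).

(* Main.v *)
Require Import Defs.
From mathcomp Require Import all_boot all_order all_algebra all_fingroup all_solvable all_field all_character.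
Set Implicit Arguments. Unset Strict Implicit. Unset Printing Implicit Defensive.
Import GRing.Theory Num.Theory.
Local Open Scope ring_scope.

Local Open Scope group_scope.
Definition trv (gT : finGroupType) (G H : {group gT}) (i : 'I_#|G : H|%g) : gT :=
  repr (enum_val i).
Arguments trv {gT} G H i.

Lemma trv_coset gT (G H : {group gT}) i : H :* trv G H i = enum_val i.
Proof.
rewrite /trv; have /rcosetsP[x _ ->] := enum_valP i.
by rewrite rcoset_repr.
Qed.

Lemma trv_in gT (G H : {group gT}) i : H \subset G -> trv G H i \in G.
Proof.
move=> sHG; have /rcosetsP[x Gx def] := enum_valP i.
have : trv G H i \in H :* x by rewrite /trv def mem_repr_rcoset.
case/rcosetP=> h Hh ->; rewrite groupM // (subsetP sHG) //.
Qed.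

Lemma trv_inj gT (G H : {group gT}) i j :
  (trv G H i * (trv G H j)^-1 \in H)%g -> i = j.
Proof.
rewrite -mem_rcoset => /rcoset_eqP; rewrite !trv_coset; exact: enum_val_inj.
Qed.

Lemma trv_ex gT (G H : {group gT}) i g : H \subset G -> g \in G ->
  exists j, (trv G H i * g * (trv G H j)^-1 \in H)%g.
Proof.
move=> sHG Gg.
have Ax : H :* (trv G H i * g) \in rcosets H G.
  by apply/rcosetsP; exists (trv G H i * g); rewrite // groupM // trv_in.
pose j := enum_rank_in Ax (H :* (trv G H i * g)); exists j.
have ej : enum_val j = H :* (trv G H i * g) := enum_rankK_in Ax Ax.
have : trv G H j \in enum_val j.
  by rewrite /trv; have/rcosetsP[x _ ->] := enum_valP j; exact: mem_repr_rcoset.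
rewrite ej.
rewrite mem_rcoset => hin.
by rewrite -(groupV H) invMg invgK.
Qed.

Lemma trv_uniq gT (G H : {group gT}) x j k :
  x * (trv G H j)^-1 \in H -> x * (trv G H k)^-1 \in H -> j = k.
Proof.
move=> hj hk; apply: (@trv_inj gT G H).
have -> : trv G H j * (trv G H k)^-1 = (x * (trv G H j)^-1)^-1 * (x * (trv G H k)^-1).
  by rewrite invMg invgK !mulgA mulgKV.
by rewrite groupM ?groupV.
Qed.

Local Close Scope group_scope.

Definition monmx gT (G H : {group gT}) (phi : 'CF(H)) (g : gT) : 'M[algC]_(#|G : H|%g) :=
  \matrix_(i, j) phi (trv G H i * g * (trv G H j)^-1)%g.

Lemma monmx_repr gT (G H : {group gT}) (phi : 'CF(H)) :
  H \subset G -> phi \is a linear_char -> mx_repr G (monmx G phi).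
Proof.
move=> sHG lin; split.
  apply/matrixP => i j; rewrite !mxE mulg1; case: (eqVneq i j) => [->|ne].
    by rewrite mulgV lin_char1.
  rewrite cfun0 //; apply/negP => /trv_inj eq; by rewrite eq eqxx in ne.
move=> g h Gg Gh; apply/matrixP => i k; rewrite !mxE.
have [j hj] := trv_ex i sHG Gg.
rewrite (bigD1 j) //= big1 ?addr0; last first.
  move=> j' nj; rewrite !mxE cfun0 ?mul0r //; apply/negP => hj'.
  by move: nj; rewrite (trv_uniq hj hj') eqxx.
rewrite !mxE.
set a := (trv G H i * g * (trv G H j)^-1)%g.
set b := (trv G H j * h * (trv G H k)^-1)%g.
have -> : (trv G H i * (g * h) * (trv G H k)^-1)%g = (a * b)%g.
  by rewrite /a /b !mulgA mulgKV.
have [Hb|nHb] := boolP (b \in H).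
  by rewrite lin_charM.
by rewrite (cfun0 phi nHb) mulr0 cfun0 // groupMl.
Qed.

Lemma monmx_char gT (G H : {group gT}) (phi : 'CF(H)) (sHG : H \subset G)
  (lin : phi \is a linear_char) :
  cfRepr (MxRepresentation (monmx_repr sHG lin)) = 'Ind[G] phi.
Proof.
apply/cfun_inP => x Gx; rewrite cfunE Gx mulr1n cfIndE //= /mxtrace.
rewrite (eq_bigr (fun i => phi (trv G H i * x * (trv G H i)^-1)%g)); last first.
  by move=> i _; rewrite /monmx mxE.
rewrite (reindex_inj invg_inj) /=.
rewrite (eq_bigl (fun y => y \in G)); last by move=> y; rewrite /= groupV.
case/and3P: (rcosets_partition sHG) => /eqP defG triv _.
have -> : \sum_(y in G) phi (x ^ y^-1)%g = \sum_(y in cover (rcosets H G)) phi (x ^ y^-1)%g.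
  by rewrite defG.
rewrite big_trivIset // (big_enum_val (fun A : {set gT} => \sum_(y in A) phi (x ^ y^-1)%g)) /=.
have inner (i : 'I_#|G : H|%g) : \sum_(y in (enum_val i : {set gT})) phi (x ^ y^-1)%g =
     phi (trv G H i * x * (trv G H i)^-1)%g *+ #|H|.
  rewrite -(@trv_coset gT G H i) -rcosetE /rcoset big_imset /=; last first.
    by move=> a b _ _; apply: mulIg.
  rewrite -sumr_const; apply: eq_bigr => h Hh.
  rewrite (_ : (x ^ (h * trv G H i)^-1)%g = ((trv G H i * x * (trv G H i)^-1) ^ h^-1)%g).
    by rewrite cfunJ ?groupV.
  by rewrite !conjgE !invgK invMg !mulgA.
rewrite [in RHS](eq_bigr (fun i => phi (trv G H i * x * (trv G H i)^-1)%g *+ #|H|)); last first.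
  by move=> i _; exact: inner i.
by rewrite sumrMnl -[_ *+ #|H|]mulr_natr mulrC mulfK // neq0CG.
Qed.

Lemma monomial_from_rsim gT (G H : {group gT}) (phi : 'CF(H)) m (r : 'I_m -> gT)
    (M : mx_representation algC G m) n (rG : mx_representation algC G n) :
  phi \is a linear_char -> H \subset G ->
  (forall i, r i \in G) ->
  (forall i g, g \in G -> exists j, (r i * g * (r j)^-1)%g \in H) ->
  (forall i j, (r i * (r j)^-1)%g \in H -> i = j) ->
  (forall g, M g = \matrix_(i, j) phi (r i * g * (r j)^-1)%g) ->
  mx_rsim M rG ->
  exists B, monomial_structure rG B /\
    forall i : 'I_n, exists2 a, a \in G &
      [set g in G | (row i B *m rG g <= row i B)%MS] = (H :^ a)%g.
Proof.
move=> lin sHG hr hex hinj hM [B eqmn fB hsim]; subst m.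
have uB : B \in unitmx by rewrite -row_free_unit.
have huniq x j k : (x * (r j)^-1)%g \in H -> (x * (r k)^-1)%g \in H -> j = k.
  move=> hj hk; apply: hinj.
  have -> : (r j * (r k)^-1 = (x * (r j)^-1)^-1 * (x * (r k)^-1))%g.
    by rewrite invMg invgK !mulgA mulgKV.
  by rewrite groupM ?groupV.
have key g i j : g \in G -> (r i * g * (r j)^-1)%g \in H ->
    row i B *m rG g = phi (r i * g * (r j)^-1)%g *: row j B.
  move=> Gg hj; rewrite -row_mul -hsim // row_mul.
  have -> : row i (M g) = phi (r i * g * (r j)^-1)%g *: delta_mx 0 j.
    apply/rowP => k; rewrite hM !mxE eqxx /=.
    case: (eqVneq k j) => [->|nkj]; first by rewrite mulr1.
    rewrite mulr0 cfun0 //; apply/negP => hk.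
    by move: nkj; rewrite (huniq _ _ _ hk hj) eqxx.
  by rewrite -scalemxAl -rowE.
have rows_indep i j : (row j B <= row i B)%MS -> j = i.
  move=> /(submxMr (invmx B)); rewrite -!row_mul mulmxV // !row1 => /sub_rVP [c hc].
  have := congr1 (fun v : 'rV_n => v 0 j) hc; rewrite !mxE !eqxx /=.
  case: (eqVneq j i) => // ne; rewrite mulr0 => /eqP; by rewrite oner_eq0.
exists B; split.
  split=> // g Gg i; have [j hj] := hex i g Gg; exists j.
  by rewrite (key _ _ _ Gg hj) scalemx_sub.
move=> i; exists (r i) => //.
apply/setP => g; rewrite inE mem_conjg conjgE invgK.
have [Gg|nGg] := boolP (g \in G); last first.
  rewrite /=; apply/esym/negP => hH; apply: (negP nGg).
  have := subsetP sHG _ hH.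
  move=> hG; rewrite (_ : g = ((r i)^-1 * (r i * g * (r i)^-1) * r i)%g).
    by rewrite mulgA in hG; rewrite groupMr ?hr // groupMl ?groupV ?hr.
  by rewrite !mulgA mulVg mul1g mulgKV.
have [j hj] := hex i g Gg.
rewrite /= (key _ _ _ Gg hj) (eqmx_scale _ (lin_char_neq0 lin hj)).
apply/idP/idP => [/rows_indep ji | hi]; first by move: hj; rewrite ji mulgA.
by rewrite mulgA in hi; rewrite (huniq _ _ _ hj hi) submx_refl.
Qed.

Lemma monomial_exists gT (G H : {group gT}) (phi : 'CF(H)) n (rG : mx_representation algC G n) :
  H \subset G -> phi \is a linear_char -> cfRepr rG = 'Ind[G] phi ->
  exists B, monomial_structure rG B /\
    forall i : 'I_n, exists2 a, a \in G &
      [set g in G | (row i B *m rG g <= row i B)%MS] = (H :^ a)%g.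
Proof.
move=> sHG lin hrep.
apply: (@monomial_from_rsim gT G H phi _ (trv G H) (MxRepresentation (monmx_repr sHG lin))) => //.
- by move=> i; exact: trv_in.
- by move=> i g Gg; exact: trv_ex.
- by move=> i j; exact: trv_inj.
- by apply/cfRepr_rsimP; rewrite monmx_char hrep.
Qed.

Unset Implicit Arguments.
Set Strict Implicit.

Theorem lemma4p4 (gT : finGroupType) (G H1 H2 : {group gT}) (xi : 'CF(H1)) :
  H1 \subset G -> H2 \subset G ->
  xi \is a linear_char -> G_solitary G xi ->
  ((exists2 chi : 'CF(H2), chi \is a linear_char & 'Ind[G] xi = 'Ind[G] chi)
   <-> (exists2 g, g \in G & H2 :=: (H1 :^ g)%g)).
Proof.
move=> sH1G sH2G linxi sol; split.
  case=> chi linchi hind.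
  pose rG := MxRepresentation (monmx_repr sH1G linxi).
  have hr1 : cfRepr rG = 'Ind[G] xi := monmx_char sH1G linxi.
  have [B1 [m1 st1]] := monomial_exists sH1G linxi hr1.
  have hr2 : cfRepr rG = 'Ind[G] chi by rewrite hr1 hind.
  have [B2 [m2 st2]] := monomial_exists sH2G linchi hr2.
  have [_ iso] := sol _ rG hr1.
  have [f hf] := iso B1 B2 m1 m2.
  pose i0 : 'I_(#|G : H1|%g) := Ordinal (indexg_gt0 G H1).
  have [a Ga ea] := st1 i0; have [b Gb eb] := st2 (f i0).
  have : [set g in G | (row i0 B1 *m rG g <= row i0 B1)%MS] =
         [set g in G | (row (f i0) B2 *m rG g <= row (f i0) B2)%MS].
    apply/setP => g; rewrite !inE; have [Gg|] //= := boolP (g \in G).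
    by apply/idP/idP => h; [exact/(hf g Gg i0 i0) | exact/(hf g Gg i0 i0)].
  rewrite ea eb => e.
  exists (a * b^-1)%g; first by rewrite groupM ?groupV.
  by rewrite conjsgM e conjsgK.
case=> g Gg eH2.
have eG : H2 = (H1 :^ g)%G by apply: val_inj; exact: eH2.
subst H2.
pose chi := cfIsom (conj_isom H1 g) xi.
exists chi; first by rewrite cfIsom_lin_char.
have chiE z : chi z = xi (z ^ g^-1)%g.
  have [hz|hz] := boolP (z \in (H1 :^ g)%g).
    have hz' : (z ^ g^-1)%g \in H1 by rewrite -mem_conjg.
    by rewrite -{1}(conjgKV g z) -(conjgmE H1) /chi cfIsomE.
  by rewrite !cfun0 // -mem_conjg.
apply/cfun_inP => x Gx; rewrite !cfIndE // cardJg; congr (_ * _).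
under [in RHS]eq_bigr do rewrite chiE -conjgM.
rewrite [in RHS](reindex_inj (mulIg g)) /=.
rewrite [in RHS](eq_bigl (fun y => y \in G)); last by move=> y; rewrite /= groupMr.
by apply: eq_bigr => y _; rewrite mulgK.
Qed.
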